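(* Every (one-sided) infinite word that contains no $3$-antipower as a factor contains at most two distinct letters.
   Context: A $3$-antipower is a finite word $u_1u_2u_3$ with $|u_1|=|u_2|=|u_3|$ and $u_1,u_2,u_3$ pairwise distinct; a factor is a contiguous subword. *)

(* Defs.v *)
From mathcomp Require Import all_boot.
Set Implicit Arguments. Unset Strict Implicit. Unset Printing Implicit Defensive.

Definition antipower3 {A : eqType} (s : seq A) : Prop :=
  exists m : nat,
    size s = 3 * m /\
    let u1 := take m s in
    let u2 := take m (drop m s) in
    let u3 := drop (2 * m) s in
    [/\ u1 != u2, u1 != u3 & u2 != u3].

Definition factor_of {A : Type} (w : nat -> A) (s : seq A) : Prop :=
  exists i n : nat, s = mkseq (fun k => w (i + k)) n.

(* Main.v *)
Require Import Defs.
From mathcomp Require Import all_boot zify.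

Section S.
Variable (A : eqType) (w : nat -> A).
Hypothesis H : forall s : seq A, factor_of w s -> ~ antipower3 s.

Lemma neq_nth (s t : seq A) j : nth (w 0) s j != nth (w 0) t j -> s != t.
Proof. by apply: contraNneq => ->. Qed.

Lemma tool i m j12 j13 j23 : j12 < m -> j13 < m -> j23 < m ->
  w (i + j12) != w (i + m + j12) ->
  w (i + j13) != w (i + 2 * m + j13) ->
  w (i + m + j23) != w (i + 2 * m + j23) -> False.
Proof.
move=> h12 h13 h23 d12 d13 d23.
apply: (H (mkseq (fun k => w (i + k)) (3 * m))).
  by exists i, (3 * m).
exists m; split; first by rewrite size_mkseq.
split.
- apply: (@neq_nth _ _ j12).
  rewrite nth_take // nth_take // nth_drop !nth_mkseq; try lia.
  rewrite !addnA; move: d12; congr (w _ != w _); lia.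
- apply: (@neq_nth _ _ j13).
  rewrite nth_take // nth_drop !nth_mkseq; try lia.
  rewrite !addnA; move: d13; congr (w _ != w _); lia.
- apply: (@neq_nth _ _ j23).
  rewrite nth_take // !nth_drop !nth_mkseq; try lia.
  rewrite !addnA; move: d23; congr (w _ != w _); lia.
Qed.

Lemma tri i : w i != w (i+1) -> w i != w (i+2) -> w (i+1) != w (i+2) -> False.
Proof.
move=> a b c; apply: (@tool i 1 0 0 0) => //; by rewrite ?addn0 // -?addnA.
Qed.


Lemma tool' i m j12 j13 j23 a1 b1 a2 b2 a3 b3 : j12 < m -> j13 < m -> j23 < m ->
  a1 = i + j12 -> b1 = i + m + j12 -> a2 = i + j13 -> b2 = i + 2 * m + j13 ->
  a3 = i + m + j23 -> b3 = i + 2 * m + j23 ->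
  w a1 != w b1 -> w a2 != w b2 -> w a3 != w b3 -> False.
Proof. by move=> ? ? ? -> -> -> -> -> ->; apply: tool. Qed.

Lemma key2 : w 0 != w 1 -> w 0 != w 3 -> w 1 != w 3 -> w 2 = w 1 -> False.
Proof.
move=> n01 n03 n13 r2.
have n31 : w 3 != w 1 by rewrite eq_sym.
have c1 : (w 4 == w 1) || (w 4 == w 3).
  apply/negPn/negP => /norP [h1 h2].
  by apply: (@tool' 2 1 0 0 0 2 3 2 4 3 4) => //; rewrite ?r2 // eq_sym.
case/orP: c1 => /eqP c1; last first.
  by apply: (@tool' 0 2 0 0 0 0 2 0 4 2 4) => //; rewrite ?r2 ?c1.
case: (w 5 =P w 3) => c2; last first.
  apply: (@tool' 0 2 0 0 1 0 2 0 4 3 5) => //; rewrite ?r2 ?c1 //.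
  by rewrite eq_sym; apply/eqP.
have c3 : (w 6 == w 1) || (w 6 == w 3).
  apply/negPn/negP => /norP [h1 h2].
  by apply: (@tool' 4 1 0 0 0 4 5 4 6 5 6) => //; rewrite ?c1 ?c2 // eq_sym.
case/orP: c3 => /eqP c3.
  by apply: (@tool' 0 3 0 0 0 0 3 0 6 3 6) => //; rewrite ?c3 // eq_sym.
by apply: (@tool' 1 2 0 0 1 1 3 1 5 4 6) => //; rewrite ?r2 ?c1 ?c2 ?c3.
Qed.

End S.

Section S2.
Variable (A : eqType) (w : nat -> A).
Hypothesis H : forall s : seq A, factor_of w s -> ~ antipower3 s.

Lemma generic p k m d : 1 <= k -> 3 * m = k + 1 + d -> 1 <= d <= m -> m <= k ->
  1 <= 2 * m - d <= k ->
  w p != w (p+1) -> w p != w (p+k+1) -> w (p+1) != w (p+k+1) ->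
  (forall i, 1 <= i <= k -> w (p+i) = w (p+1)) -> False.
Proof.
move=> k1 e dm mk hm xy xz yz run.
apply: (@tool _ w H p m 0 (m - d) (m - d)); try lia.
- by rewrite !addn0 (run m) //; lia.
- have -> : p + 2 * m + (m - d) = p + k + 1 by lia.
  case: (m - d =P 0) => [->|ne]; first by rewrite addn0.
  rewrite (run (m - d)) //; lia.
- have -> : p + 2 * m + (m - d) = p + k + 1 by lia.
  rewrite -addnA (run (m + (m - d))) //; lia.
Qed.

Lemma key p k : 1 <= k ->
  w p != w (p+1) -> w p != w (p+k+1) -> w (p+1) != w (p+k+1) ->
  (forall i, 1 <= i <= k -> w (p+i) = w (p+1)) -> False.
Proof.
move=> k1 xy xz yz run.
case: (k =P 2) => [k2|k2].
  subst k.
  pose v n := w (p + n).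
  have Hv : forall s, factor_of v s -> ~ antipower3 s.
    move=> s [i [n ->]]; apply: H; exists (p + i), n.
    by apply: eq_mkseq => q; rewrite /v addnA.
  move: xz yz; rewrite -!addnA => xz yz.
  apply: (@key2 _ v Hv); rewrite /v ?addn0 //.
  by apply: run.
have [m [d [e dm mk hm]]] : exists m d, [/\ 3 * m = k + 1 + d, 1 <= d <= m, m <= k &
  1 <= 2 * m - d <= k].
  have := divn_eq k 3; have := ltn_pmod k (isT : 0 < 3).
  case: (k %% 3) => [|[|[|r]]] //= _ ek.
  - exists (k %/ 3).+1, 2; split; lia.
  - exists (k %/ 3).+1, 1; split; lia.
  - exists (k %/ 3).+2, 3; split; lia.
exact: (@generic p k m d).
Qed.

Lemma runl t s : s <= t -> w s != w t ->
  exists r, [/\ s <= r < t, w r != w t & forall i, r < i <= t -> w i = w t].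
Proof.
elim: t => [|t IH] st ne.
  by move: st ne; rewrite leqn0 => /eqP ->; rewrite eqxx.
case: (w t =P w t.+1) => e; last first.
  exists t; split => //; last by move=> i /andP [a b]; have -> : i = t.+1 by lia.
  - have : s != t.+1 by apply: contraNneq ne => ->.
    lia.
  - exact/eqP.
have st' : s <= t.
  have : s != t.+1 by apply: contraNneq ne => ->.
  lia.
have [r [h1 h2 h3]] : exists r, [/\ s <= r < t, w r != w t & forall i, r < i <= t -> w i = w t] by apply: IH; rewrite ?e.
exists r; split; first lia.
- by rewrite -e.
- move=> i /andP [a b]; case: (i =P t.+1) => [->//|ni].
  rewrite -e; apply: h3; lia.
Qed.

End S2.

From Stdlib Require Import Classical.

Theorem corollary10 (A : eqType) (w : nat -> A) :
  (forall s : seq A, factor_of w s -> ~ antipower3 s) ->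
  exists a b : A, forall n : nat, w n = a \/ w n = b.
Proof.
move=> H; apply: NNPP => Hn.
have ex : forall a b, exists n, (w n != a) && (w n != b).
  move=> a b; apply: NNPP => h; apply: Hn; exists a, b => n.
  apply: NNPP => h2; apply: h; exists n.
  apply/andP; split; apply/eqP => e; apply: h2; [left|right]; exact: e.
have [j /andP [hj _] jmin] := ex_minnP (ex (w 0) (w 0)).
have hj0 : forall i, i < j -> w i = w 0.
  move=> i ij; apply/eqP; apply: contraTT ij => ne; rewrite -leqNgt.
  by apply: jmin; rewrite ne.
have [l /andP [hl1 hl2] lmin] := ex_minnP (ex (w 0) (w j)).
have inab : forall i, i < l -> (w i == w 0) || (w i == w j).
  move=> i il; apply/negPn/negP => /norP [a b].
  have := lmin i; rewrite a b => /(_ isT); rewrite leqNgt il //.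
have jl : j < l.
  rewrite ltnNge; apply/negP => lj.
  case: (ltngtP l j) => c.
  - by move: hl1; rewrite hj0 // eqxx.
  - by move: lj; rewrite leqNgt c.
  - by move: hl2; rewrite c eqxx.
set t := l.-1.
have tl : t.+1 = l by rewrite /t; lia.
have [s [st ne]] : exists s, s <= t /\ w s != w t.
  case: (w t =P w 0) => e.
    exists j; split; first lia.
    by rewrite e.
  by exists 0; split => //; apply/eqP => e'; apply: e; rewrite e'.
have [r [/andP [rs rt] hr run]] := @runl _ w t s st ne.
have tin : (w t == w 0) || (w t == w j) by apply: inab; lia.
have rin : (w r == w 0) || (w r == w j) by apply: inab; lia.
apply: (@key _ w H r (t - r)); first lia.
- have -> : r + 1 = r.+1 by lia.
  by rewrite (run r.+1) //; lia.
- have -> : r + (t - r) + 1 = l by lia.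
  by case/orP: rin => /eqP ->; rewrite eq_sym.
- have -> : r + (t - r) + 1 = l by lia.
  have -> : r + 1 = r.+1 by lia.
  rewrite (run r.+1); last lia.
  by case/orP: tin => /eqP ->; rewrite eq_sym.
- move=> i hi.
  have -> : r + 1 = r.+1 by lia.
  rewrite (run r.+1); last lia.
  apply: run; lia.
Qed.
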